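(* The expected runtime (number of fitness evaluations) of the (1+1)~IA$^{\text{hyp}}_{\ge}$ on $\textsc{LeadingOnes}(x)=\sum_{i=1}^n\prod_{j=1}^i x_j$ is $\Theta(n^3)$.
   Context: The (1+1)~IA$^{\text{hyp}}_{\ge}$ keeps one bit string $x\in\{0,1\}^n$ (uniformly random initially); each iteration it creates $y$ by static hypermutation with FCM and sets $x:=y$ if $f(y)\ge f(x)$ (maximisation). Static hypermutation with FCM has a constant parameter $0<c\le1$ and mutation potential $M=cn$ (an integer): distinct bit positions are chosen uniformly at random without replacement and flipped one after another; each intermediate string is evaluated (one fitness evaluation each); the process stops at the first string $z$ with $f(z)\ge f(x)$ (constructive mutation) or after $M$ flips, and the last string is $y$. *)

(* Defs.v *)
From HB Require Import structures.
From mathcomp Require Import all_boot all_order all_algebra.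
From mathcomp Require Import all_classical all_reals all_analysis.
Unset Printing Implicit Defensive.
Import Order.TTheory GRing.Theory Num.Theory.
Local Open Scope ring_scope.

(* bit strings of length n; position i : 'I_n corresponds to x_{i+1} *)
Definition bs (n : nat) := {ffun 'I_n -> bool}.

Definition LO (n : nat) (x : bs n) : nat :=
  (\sum_(i < n) \prod_(j < n | (j <= i)%N) nat_of_bool (x j))%N.

Definition opt (n : nat) : bs n := [ffun => true].

Definition flip (n : nat) (z : bs n) (i : 'I_n) : bs n :=
  [ffun j => if j == i then ~~ z j else z j].

(* State of the algorithm between two fitness evaluations:
   (current search point x, current intermediate string z of the running
   hypermutation, set S of positions already flipped in this hypermutation).
   A fresh hypermutation is represented by (x, x, set0). *)
Definition state (n : nat) := (bs n * bs n * {set 'I_n})%type.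

(* Effect of flipping the (fresh) position i and evaluating the result.
   None = the evaluated string is the optimum 1^n (the run stops). *)
Definition next (n M : nat) (s : state n) (i : 'I_n) : option (state n) :=
  let: (x, z, F) := s in
  let z' := flip n z i in
  if z' == opt n then None
  else if (LO n x <= LO n z')%N then Some (z', z', (@finset.set0 _ : {set 'I_n}))   (* constructive: stop, accept *)
  else if #|F|.+1 == M then Some (x, x, (@finset.set0 _ : {set 'I_n}))
  else Some (x, z', (finset.setU (finset.set1 i) F)).

(* One fitness evaluation: a position not yet flipped is chosen uniformly. *)
Definition kernel (R : realType) (n M : nat) (s s' : state n) : R :=
  let: (_, _, F) := s in
  if (#|F| < M)%N then
    \sum_(i | i \notin F) (((n - #|F|)%N)%:R^-1 * (next n M s i == Some s')%:R)
  else 0.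

(* (Sub-)distribution after the first evaluation (the uniform initial x),
   restricted to runs that have not yet evaluated the optimum. *)
Definition init (R : realType) (n : nat) : {ffun state n -> R} :=
  [ffun s => let: (x, z, F) := s in
     if [&& z == x, F == (@finset.set0 _ : {set 'I_n}) & x != opt n] then ((2%:R : R) ^+ n)^-1 else 0].

Definition step (R : realType) (n M : nat) (d : {ffun state n -> R})
  : {ffun state n -> R} :=
  [ffun s' => \sum_(s : state n) d s * kernel R n M s s'].

(* dist k = sub-distribution after k+1 evaluations, optimum not yet evaluated *)
Definition dist (R : realType) (n M : nat) (k : nat) : {ffun state n -> R} :=
  iter k (step R n M) (init R n).

(* surv t = Pr[T > t], T = number of fitness evaluations until the
   optimum is evaluated for the first time *)
Definition surv (R : realType) (n M : nat) (t : nat) : R :=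
  if t is t'.+1 then \sum_(s : state n) dist R n M t' s else 1.

(* E[T] = sum_{t >= 0} Pr[T > t]  (in the extended reals) *)
Definition expected_runtime (R : realType) (n M : nat) : \bar R :=
  (\sum_(t <oo) (surv R n M t)%:E)%E.

(* Main.v *)
Require Import Defs.
From HB Require Import structures.
From mathcomp Require Import all_boot all_order all_algebra.
From mathcomp Require Import all_classical all_reals all_analysis.
From mathcomp Require Import zify.
From mathcomp.algebra_tactics Require Import ring lra.
Require Import Defs.
Import Order.TTheory GRing.Theory Num.Theory.
Set Implicit Arguments. Unset Strict Implicit.
Local Open Scope ring_scope.

Lemma sum_ltn n k : (\sum_(i < n) (i < k)%N)%N = minn n k.
Proof.
elim: n => [|n IH]; first by rewrite big_ord0 min0n.
rewrite big_ord_recr /= IH.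
case: (ltnP n k) => h; lia.
Qed.

Lemma LO_eq n (x : bs n) k : (k <= n)%N ->
  (forall j : 'I_n, (j < k)%N -> x j) ->
  (forall j : 'I_n, j = k :> nat -> ~~ x j) -> LO n x = k.
Proof.
move=> kn h1 h2; rewrite /LO.
transitivity (\sum_(i < n) (i < k)%N)%N; last by rewrite sum_ltn; lia.
apply: eq_bigr => i _.
case: (ltnP i k) => hik.
  rewrite big1 // => j hj; rewrite h1 //; lia.
have kn' : (k < n)%N by apply: leq_ltn_trans (ltn_ord i).
rewrite (bigD1 (Ordinal kn')) //= (negbTE (h2 (Ordinal kn') erefl)) //.
Qed.

Lemma LO_spec n (x : bs n) :
  [/\ (LO n x <= n)%N, (forall j : 'I_n, (j < LO n x)%N -> x j) &
      (forall j : 'I_n, j = LO n x :> nat -> ~~ x j)].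
Proof.
pose Q k := (n <= k)%N || [exists j : 'I_n, (j == k :> nat) && ~~ x j].
have exQ : exists k, Q k by exists n; rewrite /Q leqnn.
case: (ex_minnP exQ) => k Qk kmin.
have kn : (k <= n)%N by apply: kmin; rewrite /Q leqnn.
have h1 : forall j : 'I_n, (j < k)%N -> x j.
  move=> j jk; apply/negPn/negP => xj.
  have : (k <= j)%N by apply: kmin; rewrite /Q; apply/orP; right; apply/existsP; exists j; rewrite eqxx xj.
  lia.
have h2 : forall j : 'I_n, j = k :> nat -> ~~ x j.
  move=> j jk; move: Qk; rewrite /Q; case/orP => [|/existsP [j' /andP [/eqP ej' xj']]].
    move: (ltn_ord j); lia.
  have -> : j = j' by apply: val_inj; rewrite /= jk ej'.
  exact: xj'.
by rewrite (LO_eq kn h1 h2); split.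
Qed.

Lemma LO_le n (x : bs n) : (LO n x <= n)%N.
Proof. by case: (LO_spec x). Qed.
Lemma LO_true n (x : bs n) (j : 'I_n) : (j < LO n x)%N -> x j.
Proof. by case: (LO_spec x) => _ h _; apply: h. Qed.
Lemma LO_false n (x : bs n) (j : 'I_n) : j = LO n x :> nat -> x j = false.
Proof. by case: (LO_spec x) => _ _ h /h /negbTE. Qed.

Lemma LO_ge n (x : bs n) k : (k <= n)%N -> (forall j : 'I_n, (j < k)%N -> x j) -> (k <= LO n x)%N.
Proof.
move=> kn h; rewrite leqNgt; apply/negP => lt.
have ln : (LO n x < n)%N by lia.
move: (h (Ordinal ln) lt); rewrite LO_false //.
Qed.

Lemma LO_lt_iff n (x : bs n) (i : 'I_n) : (i < LO n x)%N = [forall j : 'I_n, (j <= i)%N ==> x j].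
Proof.
apply/idP/forallP => [h j|h].
  by apply/implyP => ji; apply: LO_true; lia.
apply: LO_ge; first exact: ltn_ord.
by move=> j ji; move: (h j) => /implyP; apply; lia.
Qed.

Lemma flipE n (z : bs n) i j : flip n z i j = if j == i then ~~ z j else z j.
Proof. by rewrite /flip ffunE. Qed.

Lemma flipK n (z : bs n) i : flip n (flip n z i) i = z.
Proof. by apply/ffunP => j; rewrite !flipE; case: eqP => // ->; rewrite negbK. Qed.

Lemma flipC n (z : bs n) i j : flip n (flip n z i) j = flip n (flip n z j) i.
Proof. by apply/ffunP => l; rewrite !flipE; case: (l =P i); case: (l =P j). Qed.

Lemma LO_opt n (x : bs n) : (x == opt n) = (LO n x == n).
Proof.
apply/eqP/eqP => [->|h].
  apply: LO_eq => //= j; rewrite /opt ffunE //. move: (ltn_ord j) => ? ?; lia.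
apply/ffunP => j; rewrite /opt ffunE; apply: LO_true; rewrite h; exact: ltn_ord.
Qed.

Lemma LO_flip_lt n (y : bs n) (i : 'I_n) : (LO n y < i)%N -> LO n (flip n y i) = LO n y.
Proof.
move=> h; apply: LO_eq; first exact: LO_le.
  move=> j hj; rewrite flipE; case: eqP => [e|_]; first by subst; lia.
  exact: LO_true.
move=> j hj; rewrite flipE; case: eqP => [e|_]; first by subst; lia.
by rewrite LO_false.
Qed.

Lemma LO_flip_gt n (y : bs n) (i : 'I_n) : (i < LO n y)%N -> LO n (flip n y i) = i.
Proof.
move=> h; apply: LO_eq; first exact: ltnW (ltn_ord i).
  move=> j hj; rewrite flipE; case: eqP => [e|_]; first by subst; lia.
  by apply: LO_true; lia.
move=> j hj; have -> : j = i by apply: val_inj.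
by rewrite flipE eqxx negbK; apply: LO_true.
Qed.

Lemma LO_flip_eq n (y : bs n) (i : 'I_n) : (i < LO n (flip n y i))%N = (LO n y == i).
Proof.
apply/idP/eqP => h.
  have := LO_flip_gt h; rewrite flipK => ->; done.
apply: LO_ge; first exact: ltn_ord.
move=> j hj; rewrite flipE; case: eqP => [->|ne]; first by rewrite LO_false.
apply: LO_true; rewrite h; have : (j : nat) <> i by move=> e; apply: ne; apply: val_inj.
lia.
Qed.

Lemma LO_flip_ge n (y : bs n) (i : 'I_n) : (i <= LO n (flip n y i))%N = (i <= LO n y)%N.
Proof.
case: (ltngtP (LO n y) i) => h.
- rewrite LO_flip_lt //; apply/idP/idP; lia.
- rewrite LO_flip_gt //; apply/idP/idP; lia.
- have h2 : (i < LO n (flip n y i))%N by rewrite LO_flip_eq h.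
  apply/idP/idP; lia.
Qed.

Definition sig n (p : 'I_n) (s : state n) : state n :=
  let: (x, z, F) := s in (flip n x p, flip n z p, F).

Lemma sigK n (p : 'I_n) : involutive (sig p).
Proof. by case=> [[x z] F]; rewrite /= !flipK. Qed.

Definition good n M (s : state n) : bool :=
  let: (x, z, F) := s in (x != opt n) &&
   (((z == x) && (F == finset.set0)) ||
    ((#|F| < M)%N && [exists j in F, (j < LO n x)%N && ~~ z j])).

Arguments good : clear implicits.

Definition oG n (R : realType) (g : state n -> R) (o : option (state n)) : R :=
  if o is Some s then g s else 0.

Lemma next_LO n M (s : state n) i s' : next n M s i = Some s' -> (LO n s.1.1 <= LO n s'.1.1)%N.
Proof.
case: s => [[x z] F]; rewrite /next; case: ifP => // _; case: ifP => [h [<-]//|_].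
by case: ifP => _ [<-] /=.
Qed.

Section K.
Variables (R : realType) (n M : nat).

Lemma kernel_ge0 s s' : 0 <= kernel R n M s s'.
Proof.
case: s => [[x z] F]; rewrite /kernel; case: ifP => _ //.
by apply: sumr_ge0 => i _; apply: mulr_ge0; rewrite ?invr_ge0 ler0n.
Qed.

Lemma kernel_LO s s' : (LO n s'.1.1 < LO n s.1.1)%N -> kernel R n M s s' = 0.
Proof.
move=> h; case: s h => [[x z] F] h; rewrite /kernel; case: ifP => _ //.
rewrite big1 // => i _; case: eqP => [/next_LO|]; last by rewrite mulr0.
by move=> /= h2; exfalso; move: h h2 => /=; lia.
Qed.

Lemma sum_oG (g : state n -> R) (c : R) (o : option (state n)) :
  \sum_s' c * (o == Some s')%:R * g s' = c * oG g o.
Proof.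
case: o => [a|] /=.
  rewrite (bigD1 a) //= eqxx mulr1 big1 ?addr0 // => b nb.
  case: eqP => [[e]|]; last by rewrite mulr0 mul0r.
  by rewrite e eqxx in nb.
by rewrite big1 ?mulr0 // => b _; rewrite mul0r.
Qed.

Lemma kernel_sum_g (g : state n -> R) (s : state n) :
  \sum_s' kernel R n M s s' * g s' =
  if (#|s.2| < M)%N then (n - #|s.2|)%:R^-1 * \sum_(i | i \notin s.2) oG g (next n M s i) else 0.
Proof.
case: s => [[x z] F]; rewrite /kernel; case: ifP => _; last first.
  by rewrite big1 // => ? _; rewrite mul0r.
under eq_bigr do rewrite mulr_suml.
rewrite exchange_big mulr_sumr; apply: eq_bigr => i _.
exact: sum_oG.
Qed.

End K.

Lemma LO_lt_n n (x : bs n) : x != opt n -> (LO n x < n)%N.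
Proof. by rewrite LO_opt => h; move: (LO_le x) h; rewrite leq_eqVlt => /orP [->|]. Qed.

Lemma LO_lt_notopt n (x : bs n) : (LO n x < n)%N -> x != opt n.
Proof. by rewrite LO_opt; apply: contraTN => /eqP ->; rewrite ltnn. Qed.

Section G.
Variables (R : realType) (n M : nat).
Hypothesis Mpos : (0 < M)%N.
Hypothesis Mn : (M <= n)%N.

Lemma next_good (s : state n) i s'' : good n M s -> i \notin s.2 ->
  next n M s i = Some s'' -> good n M s''.
Proof.
case: s => [[x z] F] /= /andP [xo Hs] iF.
rewrite /next; case: ifP => // zo; case: ifP => [hle [<-] | hlt].
  by rewrite /= zo !eqxx.
case: ifP => [_ [<-] | hM [<-]] /=; first by rewrite xo !eqxx.
rewrite xo /=; apply/orP; right; apply/andP; split.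
  rewrite cardsU1 iF add1n.
  have FM : (#|F| < M)%N.
    case/orP: Hs => [/andP [_ /eqP ->]|/andP [] //]; by rewrite cards0.
  by move/negbT: hM; rewrite eqn_leq FM /= -ltnNge.
case/orP: Hs => [/andP [/eqP zx /eqP F0]|/andP [_ /existsP [j /andP [jF /andP [jl zj]]]]].
  subst z F; apply/existsP; exists i; rewrite setU11 /= flipE eqxx negbK.
  have il : (i < LO n x)%N.
    rewrite ltnNge; apply/negP => le; move/negP: hlt; apply.
    case: (ltngtP (LO n x) i) => h.
    - by rewrite LO_flip_lt.
    - lia.
    - have := LO_flip_eq x i; rewrite h eqxx => h2; lia.
  by rewrite il LO_true.
apply/existsP; exists j; rewrite setU1r //= jl flipE.
case: eqP => [e|_ //]; by subst j; rewrite jF in iF.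
Qed.

Lemma kernel_good s s' : good n M s -> ~~ good n M s' -> kernel R n M s s' = 0.
Proof.
move=> gs gs'; case: s gs => [[x z] F] gs; rewrite /kernel; case: ifP => _ //.
rewrite big1 // => i iF; case: eqP => [e|]; last by rewrite mulr0.
by move: (next_good gs iF e); rewrite (negbTE gs').
Qed.

Lemma good_card (s : state n) : good n M s -> (#|s.2| < M)%N.
Proof.
case: s => [[x z] F] /= /andP [_ /orP [/andP [_ /eqP ->]|/andP [] //]].
by rewrite cards0.
Qed.

Lemma sum_notin (c : R) (F : {set 'I_n}) : \sum_(i | i \notin F) c = (n - #|F|)%:R * c.
Proof.
have -> : \sum_(i | i \notin F) c = \sum_(i in ~: F) c by apply: eq_bigl => i; rewrite inE.
by rewrite sumr_const cardsCs finset.setCK card_ord mulr_natl.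
Qed.

Definition gpot (h : nat -> R) (s : state n) : R :=
  let: (x, z, F) := s in (if F == finset.set0 then 0 else (M - #|F|)%:R) + h (LO n x).

Lemma PG_mid (h : nat -> R) (s : state n) : good n M s -> s.2 != finset.set0 ->
  \sum_s' kernel R n M s s' * gpot h s' = gpot h s - 1.
Proof.
move=> gs F0; rewrite kernel_sum_g (good_card gs).
case: s gs F0 => [[x z] F] /= /andP [xo Hs] F0.
have [FM [j /andP [jF /andP [jl zj]]]] : (#|F| < M)%N /\ exists j, (j \in F) && ((j < LO n x)%N && ~~ z j).
  case/orP: Hs => [/andP [_ /eqP F0']|/andP [FM /existsP [j hj]]]; last by split => //; exists j.
  by rewrite F0' eqxx in F0.
rewrite (negbTE F0).
have step : forall i, i \notin F -> oG (gpot h) (next n M (x, z, F) i) = (M - #|F|)%:R + h (LO n x) - 1.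
  move=> i iF.
  have zj' : flip n z i j = false.
    rewrite flipE; case: eqP => [e|_]; first by subst j; rewrite jF in iF.
    exact: negbTE.
  have lz : (LO n (flip n z i) <= j)%N.
    rewrite leqNgt; apply/negP => /LO_true; by rewrite zj'.
  have zo : (flip n z i == opt n) = false.
    apply/negbTE/LO_lt_notopt; move: (ltn_ord j); lia.
  have hlt : (LO n x <= LO n (flip n z i))%N = false by apply/negbTE; rewrite -ltnNge; lia.
  rewrite /next zo hlt; case: ifP => [/eqP hM|hM] /=.
    rewrite eqxx add0r -hM subSnn; lra.
  have -> : (i |: F == finset.set0) = false.
    by apply/negbTE/set0Pn; exists i; rewrite setU11.
  rewrite cardsU1 iF add1n.
  have e : (M - #|F|)%:R = (M - #|F|.+1)%:R + 1 :> R.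
    rewrite natr1; congr (_ %:R); move/negbT: hM; lia.
  rewrite e; lra.
rewrite (eq_bigr _ step) sum_notin mulrA mulVf ?mul1r //.
rewrite pnatr_eq0; move: (leq_trans FM Mn); lia.
Qed.

End G.

Section H.
Variables (R : realType) (n : nat).

Definition hh (a : nat -> R) (q : nat) : R := \sum_(j < n) (q <= j)%N%:R * a j.

Lemma hh_n a : hh a n = 0.
Proof. rewrite /hh big1 // => j _; rewrite leqNgt ltn_ord mul0r //. Qed.

Lemma hh_mono a q1 q2 : (forall j, 0 <= a j) -> (q1 <= q2)%N -> hh a q2 <= hh a q1.
Proof.
move=> a0 q12; rewrite /hh; apply: ler_sum => j _; apply: ler_wpM2r => //.
rewrite ler_nat; case: (leqP q2 j) => h //; rewrite (leq_trans q12 h) //.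
Qed.

Lemma sum_eqk (k : nat) (f : 'I_n -> R) (kn : (k < n)%N) :
  \sum_(i < n) (i == k :> nat)%:R * f i = f (Ordinal kn).
Proof.
rewrite (bigD1 (Ordinal kn)) //= eqxx mul1r big1 ?addr0 // => i ne.
have -> : (i == k :> nat) = false.
  apply/negbTE; apply: contra ne => /eqP e; apply/eqP/val_inj => /=; exact: e.
by rewrite mul0r.
Qed.

Lemma sum_ltk (k : nat) : (k <= n)%N -> \sum_(i < n) (i < k)%N%:R = k%:R :> R.
Proof. by move=> kn; rewrite -natr_sum sum_ltn; congr (_ %:R); lia. Qed.

Lemma hh_rec a k : (k < n)%N -> hh a k = a k + hh a k.+1.
Proof.
move=> kn; rewrite /hh.
have -> : \sum_(j < n) (k <= j)%N%:R * a j =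
  \sum_(j < n) ((j == k :> nat)%:R * a j + (k.+1 <= j)%N%:R * a j).
  apply: eq_bigr => j _; rewrite -mulrDl -natrD; congr (_%:R * _).
  case: (ltngtP j k) => h; lia.
by rewrite big_split /= (sum_eqk _ kn).
Qed.

End H.

Arguments next : simpl never.

Section F.
Variables (R : realType) (n M : nat).
Hypothesis Mpos : (0 < M)%N.
Hypothesis Mn : (M <= n)%N.

Lemma PG_fresh (h : nat -> R) (x : bs n) : x != opt n -> h n = 0 ->
  \sum_s' kernel R n M (x, x, finset.set0) s' * gpot M h s' =
  gpot M h (x, x, finset.set0) - 1 + n%:R^-1 *
   \sum_(i < n) (i == LO n x :> nat)%:R *
      (n%:R + i%:R * (M%:R - 1) + h (LO n (flip n x i)) - h i).
Proof.
move=> xo hn0.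
have kn := LO_lt_n xo.
rewrite kernel_sum_g /= cards0 Mpos subn0.
set k := LO n x.
have step : forall i : 'I_n, oG (gpot M h) (next n M (x, x, finset.set0) i) =
   h k + (i < k)%N%:R * (M%:R - 1) + (i == k :> nat)%:R * (h (LO n (flip n x i)) - h k).
  move=> i; rewrite /next; case: (ltngtP i k) => hik.
  - have e1 : LO n (flip n x i) = i by apply: LO_flip_gt.
    have -> : (flip n x i == opt n) = false by apply/negbTE/LO_lt_notopt; rewrite e1.
    have -> : (LO n x <= LO n (flip n x i))%N = false by rewrite e1; apply/negbTE; rewrite -ltnNge.
    rewrite cards0; case: eqP => [hM|hM] /=.
      by rewrite eqxx -hM; lra.
    have -> : (i |: finset.set0 == finset.set0) = false.
      by apply/negbTE/set0Pn; exists i; rewrite setU11.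
    rewrite finset.setU0 cards1 natrB // mul1r; lra.
  - have e1 : LO n (flip n x i) = k by apply: LO_flip_lt.
    have -> : (flip n x i == opt n) = false by apply/negbTE/LO_lt_notopt; rewrite e1.
    rewrite e1 leqnn /= eqxx.
    rewrite ?e1; lra.
  - have hq : (i < LO n (flip n x i))%N by rewrite LO_flip_eq; apply/eqP.
    rewrite mul1r mul0r addr0.
    case: ifP => zo /=.
      by move: zo; rewrite LO_opt => /eqP ->; rewrite hn0; lra.
    have -> : (LO n x <= LO n (flip n x i))%N by rewrite /k in hik; lia.
    by rewrite /= eqxx; lra.
under eq_bigl do rewrite finset.in_set0.
rewrite /= (eq_bigr _ (fun i _ => step i)) !big_split /= -!mulr_suml.
rewrite sumr_const card_ord sum_ltk; last exact: ltnW.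
rewrite (sum_eqk (fun i => h (LO n (flip n x i)) - h k) kn).
rewrite (sum_eqk (fun i : 'I_n => n%:R + i%:R * (M%:R - 1) + h (LO n (flip n x i)) - h i) kn) /=.
rewrite eqxx add0r.
have n0 : n%:R != 0 :> R by rewrite pnatr_eq0; lia.
rewrite -mulr_natr; field.
exact: n0.
Qed.

Lemma next_sig_eq (p : 'I_n) x z F x' z' F' i : (LO n x < p)%N -> (LO n x' < p)%N ->
  (next n M (flip n x p, flip n z p, F) i == Some (flip n x' p, flip n z' p, F')) =
  (next n M (x, z, F) i == Some (x', z', F')).
Proof.
move=> hx hx'.
case: (ltnP (LO n (flip n z i)) p) => hz.
  have e : next n M (flip n x p, flip n z p, F) i = omap (sig p) (next n M (x, z, F) i).
    rewrite /next [flip n (flip n z p) i]flipC !LO_opt (LO_flip_lt hz) (LO_flip_lt hx).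
    case: ifP => // _; case: ifP => // _; case: ifP => // _.
  rewrite e; case: (next n M (x, z, F) i) => [a|] /=; last by [].
  apply/eqP/eqP => [[e1]|[->]] //.
  congr Some; apply: (can_inj (sigK p)); rewrite e1 //.
have L1 : (next n M (x, z, F) i == Some (x', z', F')) = false.
  rewrite /next; case: ifP => // _.
  have -> : (LO n x <= LO n (flip n z i))%N by lia.
  by apply/eqP => -[e _ _]; rewrite -e in hx'; lia.
rewrite L1; rewrite /next [flip n (flip n z p) i]flipC; case: ifP => // _.
have hz2 : (p <= LO n (flip n (flip n z i) p))%N by rewrite LO_flip_ge.
rewrite (LO_flip_lt hx).
have -> : (LO n x <= LO n (flip n (flip n z i) p))%N by lia.
apply/eqP => -[e _ _]; rewrite e (LO_flip_lt hx') in hz2; lia.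
Qed.

Lemma sig11 (p : 'I_n) (s : state n) : (sig p s).1.1 = flip n s.1.1 p.
Proof. by case: s => [[x z] F]. Qed.

Lemma kernel_sym (p : 'I_n) s s' : (LO n s.1.1 < p)%N -> (LO n s'.1.1 < p)%N ->
  kernel R n M (sig p s) (sig p s') = kernel R n M s s'.
Proof.
case: s => [[x z] F]; case: s' => [[x' z'] F'] /= h h'.
rewrite /kernel /=; case: ifP => // _; apply: eq_bigr => i _.
by rewrite next_sig_eq.
Qed.

Lemma distS t s' : dist R n M t.+1 s' = \sum_s dist R n M t s * kernel R n M s s'.
Proof. by rewrite /dist iterS /step ffunE. Qed.

Lemma dist_inv t : (forall s, 0 <= dist R n M t s) /\ (forall s, ~~ good n M s -> dist R n M t s = 0).
Proof.
elim: t => [|t [IH1 IH2]].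
  split => -[[x z] F]; rewrite /dist /= /init ffunE.
    by case: ifP => // _; rewrite invr_ge0 exprn_ge0 // ler0n.
  case: ifP => // /and3P [zx F0 xo].
  by rewrite /= xo zx F0.
split => s'; rewrite distS.
  by apply: sumr_ge0 => s _; apply: mulr_ge0 => //; exact: kernel_ge0.
move=> gs'; rewrite big1 // => s _.
case: (boolP (good n M s)) => gs; first by rewrite kernel_good // mulr0.
by rewrite IH2 // mul0r.
Qed.

Lemma dist_ge0 t s : 0 <= dist R n M t s.
Proof. by case: (dist_inv t) => h _; apply: h. Qed.

Lemma dist_good t s : ~~ good n M s -> dist R n M t s = 0.
Proof. by case: (dist_inv t) => _ h; apply: h. Qed.

Lemma dist_sym t (p : 'I_n) s : (LO n s.1.1 < p)%N -> dist R n M t (sig p s) = dist R n M t s.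
Proof.
elim: t s => [|t IH] s hs.
  case: s hs => [[x z] F] /= hs; rewrite /dist /= /init !ffunE.
  have fi : injective (fun y : bs n => flip n y p) by move=> a b /(congr1 (fun y => flip n y p)); rewrite !flipK.
  rewrite (inj_eq fi) !LO_opt (LO_flip_lt hs) //.
rewrite !distS (reindex_inj (can_inj (sigK p))) /=.
apply: eq_bigr => s0 _.
case: (ltnP (LO n s0.1.1) p) => h0.
  by rewrite IH // kernel_sym.
have k1 : kernel R n M s0 s = 0 by apply: kernel_LO; exact: (leq_trans hs h0).
have k2 : kernel R n M (sig p s0) (sig p s) = 0.
  apply: kernel_LO; rewrite !sig11 (LO_flip_lt hs).
  have h1 : (p <= LO n (flip n s0.1.1 p))%N by rewrite LO_flip_ge.
  exact: (leq_trans hs h1).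
by rewrite k1 k2 !mulr0.
Qed.

End F.

Arguments next : simpl never.

Section Phi.
Variables (R : realType) (n M : nat).
Hypothesis Mpos : (0 < M)%N.
Hypothesis Mn : (M <= n)%N.

Lemma collapse (f : state n -> R) :
  (forall x z F, ~~ ((z == x) && (F == finset.set0)) -> f (x, z, F) = 0) ->
  \sum_s f s = \sum_x f (x, x, finset.set0).
Proof.
move=> f0.
transitivity (\sum_ab \sum_(F0 : {set 'I_n}) f (ab, F0)).
  by rewrite pair_bigA; apply: eq_bigr => -[ab F0].
transitivity (\sum_(ab : bs n * bs n) f (ab, finset.set0)).
  apply: eq_bigr => -[a b] _; rewrite (bigD1 finset.set0) //= big1 ?addr0 // => F0 hF.
  by apply: f0; rewrite (negbTE hF) andbF.
transitivity (\sum_(a : bs n) \sum_(b : bs n) f (a, b, finset.set0)).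
  by rewrite pair_bigA; apply: eq_bigr => -[a b].
apply: eq_bigr => a _; rewrite (bigD1 a) //= big1 ?addr0 // => b hb.
by apply: f0; rewrite (negbTE hb).
Qed.

Definition Phi (h : nat -> R) t := \sum_s dist R n M t s * gpot M h s.
Definition mass t := \sum_s dist R n M t s.

Definition Efr (h : nat -> R) (s : state n) : R :=
  let: (x, z, F) := s in
  if (z == x) && (F == finset.set0) then
    n%:R^-1 * \sum_(i < n) (i == LO n x :> nat)%:R *
      (n%:R + i%:R * (M%:R - 1) + h (LO n (flip n x i)) - h i)
  else 0.

Lemma PG_good h s : good n M s -> h n = 0 ->
  \sum_s' kernel R n M s s' * gpot M h s' = gpot M h s - 1 + Efr h s.
Proof.
case: s => [[x z] F] gs hn0.
case: (boolP (F == finset.set0)) => F0.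
  have zx : z = x.
    move: gs => /andP [_ /orP [/andP [/eqP //]|/andP [_ /existsP [j /andP [jF _]]]]].
    by move/eqP: F0 => F0; rewrite F0 finset.in_set0 in jF.
  move/eqP: F0 => F0; subst z F.
  rewrite (PG_fresh Mpos Mn) //; last by case/andP: gs.
  by rewrite /Efr !eqxx.
rewrite (PG_mid Mpos Mn h) //= (negbTE F0) andbF addr0 //.
Qed.

Lemma phi_rec h t : h n = 0 ->
  Phi h t.+1 = Phi h t - mass t + \sum_s dist R n M t s * Efr h s.
Proof.
move=> hn0.
have -> : Phi h t.+1 = \sum_s dist R n M t s * (\sum_s' kernel R n M s s' * gpot M h s').
  rewrite /Phi; under eq_bigr do rewrite distS mulr_suml.
  rewrite exchange_big; apply: eq_bigr => s _; rewrite mulr_sumr.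
  by apply: eq_bigr => s' _; rewrite mulrA.
rewrite /Phi /mass -sumrB -big_split /=; apply: eq_bigr => s _.
case: (boolP (good n M s)) => gs.
  by rewrite PG_good //; ring.
by rewrite (dist_good R Mpos Mn) // !mul0r; ring.
Qed.

Lemma mass_ge0 t : 0 <= mass t.
Proof. by apply: sumr_ge0 => s _; exact: dist_ge0. Qed.

Lemma kernel_row s : \sum_s' kernel R n M s s' <= 1.
Proof.
have -> : \sum_s' kernel R n M s s' = \sum_s' kernel R n M s s' * (fun _ => 1) s'.
  by apply: eq_bigr => s' _; rewrite mulr1.
rewrite kernel_sum_g.
case: ifP => _ //.
have le : \sum_(i | i \notin s.2) oG (fun _ => (1:R)) (next n M s i) <= (n - #|s.2|)%:R.
  apply: (@le_trans _ _ (\sum_(i | i \notin s.2) (1:R))).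
    by apply: ler_sum => i _; case: (next n M s i).
  by rewrite sum_notin mulr1.
case: (eqVneq ((n - #|s.2|)%:R : R) 0) => [->|nz].
  by rewrite invr0 mul0r.
apply: le_trans (ler_wpM2l _ le) _; first by rewrite invr_ge0 ler0n.
by rewrite mulVf.
Qed.

Lemma mass_mono t : mass t.+1 <= mass t.
Proof.
rewrite /mass; under eq_bigr do rewrite distS.
rewrite exchange_big /=; apply: ler_sum => s _.
rewrite -mulr_sumr -[X in _ <= X]mulr1; apply: ler_wpM2l; first exact: dist_ge0.
exact: kernel_row.
Qed.

Lemma mass_mono_le t1 t2 : (t1 <= t2)%N -> mass t2 <= mass t1.
Proof.
elim: t2 => [|t2 IH]; first by rewrite leqn0 => /eqP ->.
rewrite leq_eqVlt => /orP [/eqP ->//|h].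
exact: le_trans (mass_mono t2) (IH h).
Qed.

End Phi.

Arguments next : simpl never.

Section Down.
Variables (R : realType).

Lemma down (Mf : nat -> R) i m : (forall j, 0 <= Mf j) ->
  (forall j, (i <= j)%N -> 2 * Mf j.+1 <= Mf j) -> (i <= m)%N ->
  \sum_(j < m) (i <= j)%N%:R * (j%:R * Mf j) + (2 * m + 2)%:R * Mf m <= (2 * i + 2)%:R * Mf i.
Proof.
move=> M0 Mh; elim: m => [|m IH] im.
  have -> : i = 0%N by lia.
  by rewrite big_ord0 add0r.
case: (ltnP m i) => hm.
  have -> : i = m.+1 by lia.
  rewrite big1 ?add0r // => j _.
  have -> : (m.+1 <= j)%N = false by apply/negbTE; rewrite -ltnNge; exact: ltn_ord.
  by rewrite mul0r.
rewrite big_ord_recr /= hm mul1r.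
have IH' := IH hm.
have H := Mh m hm.
have H2 : (m%:R + 2) * (2 * Mf m.+1) <= (m%:R + 2) * Mf m.
  by apply: ler_wpM2l => //; apply: addr_ge0 => //; exact: ler0n.
have e1 : ((2 * m.+1 + 2)%:R : R) = 2 * m%:R + 4.
  have en : (2 * m.+1 + 2 = 2 * m + 4)%N by lia.
  by rewrite en natrD natrM.
have e2 : ((2 * m + 2)%:R : R) = 2 * m%:R + 2.
  by rewrite natrD natrM.
rewrite e1; rewrite e2 in IH'.
lra.
Qed.

Lemma level_bound (n : nat) (X : finType) (w : X -> R) (q : X -> nat) (i : nat) (beta b : R) :
  (i < n)%N -> (forall x, 0 <= w x) -> (forall x, w x != 0 -> (i < q x)%N) ->
  (forall j, (i <= j)%N -> 2 * (\sum_x w x * (j.+1 < q x)%N%:R) <= \sum_x w x * (j < q x)%N%:R) ->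
  0 <= beta -> beta * (2 * i + 2)%:R <= b ->
  \sum_x w x * (hh n (fun j => beta * j%:R) i - hh n (fun j => beta * j%:R) (q x)) <= b * \sum_x w x.
Proof.
move=> iN w0 wq half b0 bb.
pose Mf j := \sum_x w x * (j < q x)%N%:R.
have Mf0 : forall j, 0 <= Mf j.
  by move=> j; apply: sumr_ge0 => x _; apply: mulr_ge0 => //; exact: ler0n.
have e1 : forall x, w x * (hh n (fun j => beta * j%:R) i - hh n (fun j => beta * j%:R) (q x)) =
   \sum_(j < n) w x * (i <= j)%N%:R * (j < q x)%N%:R * (beta * j%:R).
  move=> x; case: (eqVneq (w x) 0) => [->|nz].
    by rewrite mul0r big1 // => j _; rewrite !mul0r.
  have iq := wq x nz.
  rewrite /hh -sumrB mulr_sumr; apply: eq_bigr => j _.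
  case: (leqP i j) => h1; case: (leqP (q x) j) => h2 /=; try ring.
  lia.
rewrite (eq_bigr _ (fun x _ => e1 x)) exchange_big /=.
have e2 : forall j : 'I_n, \sum_x w x * (i <= j)%N%:R * (j < q x)%N%:R * (beta * j%:R) =
   beta * ((i <= j)%N%:R * (j%:R * Mf j)).
  by move=> j; rewrite /Mf !mulr_sumr; apply: eq_bigr => x _; ring.
rewrite (eq_bigr _ (fun j _ => e2 j)) -mulr_sumr.
have D := down Mf0 half (ltnW iN).
have Mfn := Mf0 n.
have MfS : Mf i = \sum_x w x.
  apply: eq_bigr => x _; case: (eqVneq (w x) 0) => [->|nz]; first by rewrite mul0r.
  by rewrite (wq x nz) mulr1.
have : \sum_(j < n) (i <= j)%N%:R * (j%:R * Mf j) <= (2 * i + 2)%:R * Mf i.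
  apply: le_trans _ D; rewrite lerDl; apply: mulr_ge0 => //; exact: ler0n.
rewrite MfS => H.
have H1 : beta * \sum_(j < n) (i <= j)%N%:R * (j%:R * Mf j) <= beta * ((2 * i + 2)%:R * \sum_x w x).
  by apply: ler_wpM2l.
apply: le_trans H1 _; rewrite mulrA; apply: ler_wpM2r => //.
by rewrite -MfS.
Qed.

End Down.

Arguments next : simpl never.

Section Low.
Variables (R : realType) (n M : nat).
Hypothesis Mpos : (0 < M)%N.
Hypothesis Mn : (M <= n)%N.

Lemma flip_inj (p : 'I_n) : injective (fun y : bs n => flip n y p).
Proof. by move=> a b /(congr1 (fun y => flip n y p)); rewrite !flipK. Qed.

Lemma halving t (ii : 'I_n) j : (ii <= j)%N ->
  2 * (\sum_x ((LO n x == ii :> nat)%:R * dist R n M t (x, x, finset.set0)) *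
          (j.+1 < LO n (flip n x ii))%N%:R) <=
  \sum_x ((LO n x == ii :> nat)%:R * dist R n M t (x, x, finset.set0)) *
          (j < LO n (flip n x ii))%N%:R.
Proof.
move=> ij.
set w := fun x : bs n => (LO n x == ii :> nat)%:R * dist R n M t (x, x, finset.set0).
have w0 : forall x, 0 <= w x.
  by move=> x; apply: mulr_ge0; [exact: ler0n| exact: dist_ge0].
case: (ltnP j.+1 n) => jn; last first.
  rewrite big1 ?mulr0.
    by apply: sumr_ge0 => x _; apply: mulr_ge0; [exact: w0 | exact: ler0n].
  move=> x _; have := LO_le (flip n x ii).
  move=> h; have -> : (j.+1 < LO n (flip n x ii))%N = false by apply/negbTE; lia.
  by rewrite mulr0.
pose p := Ordinal jn.
have A : \sum_x w x * (j < LO n (flip n x ii))%N%:R =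
   \sum_x w x * (j.+1 < LO n (flip n x ii))%N%:R +
   \sum_x w x * (LO n (flip n x ii) == j.+1)%:R.
  rewrite -big_split /=; apply: eq_bigr => x _; rewrite -mulrDr -natrD; congr (_ * _%:R).
  case: (ltngtP (LO n (flip n x ii)) j.+1) => h //=.
have B : \sum_x w x * (j.+1 < LO n (flip n x ii))%N%:R =
   \sum_x w x * (LO n (flip n x ii) == j.+1)%:R.
  rewrite (reindex_inj (@flip_inj p)); apply: eq_bigr => x _.
  rewrite flipC.
  have := LO_flip_eq (flip n x ii) p; rewrite /= => ->.
  rewrite /w; case: (ltnP (LO n x) p) => hx.
    rewrite (LO_flip_lt hx).
    by have := dist_sym R Mpos Mn t (s := (x, x, finset.set0)) hx; rewrite /= => ->.
  have h1 : (LO n x == ii :> nat) = false by apply/negbTE; rewrite /= in hx; lia.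
  have h2 : (p <= LO n (flip n x p))%N by rewrite LO_flip_ge.
  have h3 : (LO n (flip n x p) == ii :> nat) = false by apply/negbTE; rewrite /= in h2; lia.
  by rewrite h1 h3 !mul0r.
rewrite A B; lra.
Qed.

End Low.

Arguments next : simpl never.

Section Bounds.
Variables (R : realType) (n M : nat).
Hypothesis Mpos : (0 < M)%N.
Hypothesis Mn : (M <= n)%N.

Definition aU (j : nat) : R := n%:R + j%:R * (M%:R - 1).
Definition hU := hh n aU.
Definition beta : R := (M%:R - 1) / 4.
Definition aL (j : nat) : R := beta * j%:R.
Definition hL := hh n aL.

Lemma M1 : 1 <= (M%:R : R).
Proof. by rewrite ler1n. Qed.

Lemma aU0 j : 0 <= aU j.
Proof.
rewrite /aU; have := M1; have : (0 : R) <= j%:R by exact: ler0n.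
have : (0 : R) <= n%:R by exact: ler0n.
move=> h1 h2 h3; have : 0 <= j%:R * (M%:R - 1) :> R by apply: mulr_ge0 => //; lra.
lra.
Qed.

Lemma beta0 : 0 <= beta.
Proof. rewrite /beta; have := M1; lra. Qed.

Lemma aL0 j : 0 <= aL j.
Proof. by rewrite /aL; apply: mulr_ge0; [exact: beta0 | exact: ler0n]. Qed.

Lemma Efr_upper (s : state n) : Efr M hU s <= 0.
Proof.
case: s => [[x z] F]; rewrite /Efr; case: ifP => _ //.
apply: mulr_ge0_le0; first by rewrite invr_ge0 ler0n.
apply: sumr_le0 => i _.
case: eqP => [e|_]; last by rewrite mul0r.
rewrite mul1r.
have iq : (i.+1 <= LO n (flip n x i))%N by rewrite LO_flip_eq -e eqxx.
have m := hh_mono n aU0 iq.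
have r := hh_rec aU (ltn_ord i).
rewrite /hU r /aU; rewrite /hU in m; lra.
Qed.

Lemma Efr_lower t : 0 <= \sum_s dist R n M t s * Efr M hL s.
Proof.
rewrite (@collapse R n (fun s => dist R n M t s * Efr M hL s)); last first.
  by move=> x z F h; rewrite /Efr (negbTE h) mulr0.
have -> : \sum_x dist R n M t (x, x, finset.set0) * Efr M hL (x, x, finset.set0) =
  n%:R^-1 * \sum_(i < n) \sum_x ((LO n x == i :> nat)%:R * dist R n M t (x, x, finset.set0)) *
     (n%:R + i%:R * (M%:R - 1) + hL (LO n (flip n x i)) - hL i).
  rewrite exchange_big mulr_sumr; apply: eq_bigr => x _; rewrite /Efr !eqxx /=.
  rewrite mulrCA; congr (_ * _); rewrite mulr_sumr; apply: eq_bigr => i _.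
  by rewrite eq_sym; ring.
apply: mulr_ge0; first by rewrite invr_ge0 ler0n.
apply: sumr_ge0 => i _.
set w := fun x : bs n => (LO n x == i :> nat)%:R * dist R n M t (x, x, finset.set0).
set b := n%:R + i%:R * (M%:R - 1) : R.
have -> : \sum_x w x * (b + hL (LO n (flip n x i)) - hL i) =
   b * \sum_x w x - \sum_x w x * (hL i - hL (LO n (flip n x i))).
  by rewrite mulr_sumr -sumrB; apply: eq_bigr => x _; ring.
rewrite subr_ge0.
apply: (level_bound (beta := beta)) => //.
- by move=> x; apply: mulr_ge0; [exact: ler0n | exact: dist_ge0].
- move=> x; rewrite /w; case E: (LO n x == i :> nat).
    by move=> _; rewrite LO_flip_eq E.
  by rewrite /= mul0r eqxx.
- by move=> j ij; apply: halving.
- exact: beta0.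
- rewrite /b /beta.
  have h1 := M1.
  have h2 : (M%:R : R) <= n%:R by rewrite ler_nat.
  have h3 : (0:R) <= i%:R * (M%:R - 1) by apply: mulr_ge0; [exact: ler0n | lra].
  rewrite natrD natrM; lra.
Qed.

End Bounds.

Arguments next : simpl never.

Section Final.
Variables (R : realType) (n M : nat).
Hypothesis Mpos : (0 < M)%N.
Hypothesis Mn : (M <= n)%N.

Lemma sum_bs (c : R) : \sum_(x : bs n) c = c * ((2%:R : R) ^+ n).
Proof. by rewrite sumr_const card_ffun card_bool card_ord -natrX mulr_natr. Qed.

Lemma phi0 (h : nat -> R) : Phi n M h 0 =
  \sum_(x : bs n) (if x != opt n then ((2%:R : R) ^+ n)^-1 else 0) * h (LO n x).
Proof.
rewrite /Phi (@collapse R n (fun s => dist R n M 0 s * gpot M h s)); last first.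
  move=> x z F hh0; rewrite /dist /= /init ffunE.
  case: ifP => [/and3P [a b c]|_]; last by rewrite mul0r.
  by rewrite a b in hh0.
apply: eq_bigr => x _; rewrite /dist /= /init ffunE !eqxx /= add0r //.
Qed.

Lemma two_n_gt0 : (0 : R) < (2%:R : R) ^+ n.
Proof. by apply: exprn_gt0; rewrite ltr0n. Qed.

Lemma phi0_upper (h : nat -> R) : (forall q, 0 <= h q) -> (forall q, h q <= h 0%N) ->
  Phi n M h 0 <= h 0%N.
Proof.
move=> h0 hm; rewrite phi0.
apply: (@le_trans _ _ (((2%:R : R) ^+ n)^-1 * h 0%N * (2%:R : R) ^+ n)).
  rewrite -sum_bs; apply: ler_sum => x _; case: ifP => _.
    by apply: ler_wpM2l => //; rewrite invr_ge0 ltW // two_n_gt0.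
  by rewrite mul0r; apply: mulr_ge0; [rewrite invr_ge0 ltW // two_n_gt0 | exact: h0].
rewrite mulrAC mulVf ?mul1r //.
Qed.

Lemma count_half (o : 'I_n) : \sum_(x : bs n) (~~ x o)%:R = ((2%:R : R) ^+ n) / 2.
Proof.
have e1 : \sum_(x : bs n) (~~ x o)%:R + \sum_(x : bs n) (x o)%:R = (2%:R : R) ^+ n.
  rewrite -big_split /=.
  rewrite (eq_bigr (fun _ => 1)); first by rewrite sum_bs mul1r.
  by move=> x _; case: (x o) => /=; rewrite ?mulr0n ?mulr1n ?add0r ?addr0.
have e2 : \sum_(x : bs n) ((x o)%:R : R) = \sum_(x : bs n) (~~ x o)%:R.
  rewrite (reindex_inj (@flip_inj n o)); apply: eq_bigr => x _.
  by rewrite flipE eqxx.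
rewrite e2 in e1; lra.
Qed.

Lemma phi0_lower (h : nat -> R) : (0 < n)%N -> (forall q, 0 <= h q) ->
  h 0%N / 2 <= Phi n M h 0.
Proof.
move=> n0 h0; pose o := Ordinal n0.
rewrite phi0.
apply: (@le_trans _ _ (\sum_(x : bs n) (~~ x o)%:R * (((2%:R : R) ^+ n)^-1 * h 0%N))); last first.
  apply: ler_sum => x _; case E: (x o) => /=.
    rewrite mul0r; case: ifP => _; last by rewrite mul0r.
    by apply: mulr_ge0; [rewrite invr_ge0 ltW // two_n_gt0 | exact: h0].
  have xo : x != opt n by apply/eqP => e; move: E; rewrite e /opt ffunE.
  have L : LO n x = 0%N.
    apply: LO_eq => // j hj; have -> : j = o by apply: val_inj; rewrite /= hj.
    by rewrite E.
  by rewrite xo L mul1r.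
rewrite -mulr_suml count_half.
have := two_n_gt0 => hp.
have -> : (2%:R : R) ^+ n / 2 * (((2%:R : R) ^+ n)^-1 * h 0%N) = h 0%N / 2.
  by field; rewrite gt_eqF.
by [].
Qed.

Lemma gpot_ge0 (h : nat -> R) (s : state n) : (forall q, 0 <= h q) -> 0 <= gpot M h s.
Proof.
move=> h0; case: s => [[x z] F]; rewrite /gpot; apply: addr_ge0 => //.
by case: ifP => _ //; exact: ler0n.
Qed.

Lemma Phi_ge0 (h : nat -> R) t : (forall q, 0 <= h q) -> 0 <= Phi n M h t.
Proof.
move=> h0; apply: sumr_ge0 => s _; apply: mulr_ge0; first exact: dist_ge0.
exact: gpot_ge0.
Qed.

Lemma hU0 q : 0 <= hU R n M q.
Proof. apply: sumr_ge0 => j _; apply: mulr_ge0; [exact: ler0n| exact: (aU0 R n Mpos)]. Qed.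

Lemma hL0 q : 0 <= hL R n M q.
Proof. apply: sumr_ge0 => j _; apply: mulr_ge0; [exact: ler0n| exact: (aL0 R Mpos)]. Qed.

Lemma upper_partial T : \sum_(t < T) mass R n M t <= hU R n M 0%N.
Proof.
have hn : hU R n M n = 0 by apply: hh_n.
have key : forall T, \sum_(t < T) mass R n M t + Phi n M (hU R n M) T <= Phi n M (hU R n M) 0.
  elim=> [|T' IH]; first by rewrite big_ord0 add0r.
  rewrite big_ord_recr /= (phi_rec Mpos Mn) //.
  have E : \sum_s dist R n M T' s * Efr M (hU R n M) s <= 0.
    apply: sumr_le0 => s _; apply: mulr_ge0_le0; first exact: dist_ge0.
    exact: (Efr_upper R Mpos).
  lra.
have K := key T.
have P0 : 0 <= Phi n M (hU R n M) T by apply: Phi_ge0; exact: hU0.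
have P1 : Phi n M (hU R n M) 0 <= hU R n M 0%N.
  apply: phi0_upper; first exact: hU0.
  by move=> q; apply: hh_mono => //; exact: (aU0 R n Mpos).
lra.
Qed.

Lemma lower_partial : (0 < n)%N -> exists T : nat,
  hL R n M 0%N / 4 <= \sum_(t < T) mass R n M t.
Proof.
move=> n0.
have hn : hL R n M n = 0 by apply: hh_n.
have key : forall T, Phi n M (hL R n M) 0 <= \sum_(t < T) mass R n M t + Phi n M (hL R n M) T.
  elim=> [|T' IH]; first by rewrite big_ord0 add0r.
  rewrite big_ord_recr /= (phi_rec Mpos Mn) //.
  have E := Efr_lower R Mpos Mn T'.
  lra.
set G := M%:R + hL R n M 0%N.
have G0 : 0 <= G by apply: addr_ge0; [exact: ler0n | exact: hL0].
have [T GT] : exists T : nat, G <= T%:R.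
  by exists (Num.bound G); apply: ltW; apply: archi_boundP.
exists T.
have PT : Phi n M (hL R n M) T <= G * mass R n M T.
  rewrite /Phi /mass mulr_sumr; apply: ler_sum => s _.
  rewrite mulrC; apply: ler_wpM2r; first exact: dist_ge0.
  case: s => [[x z] F]; rewrite /gpot /G; apply: lerD.
    case: ifP => _; first exact: ler0n.
    by rewrite ler_nat leq_subr.
  by apply: hh_mono => //; exact: (aL0 R Mpos).
have mT : T%:R * mass R n M T <= \sum_(t < T) mass R n M t.
  apply: (@le_trans _ _ (\sum_(t < T) mass R n M T)).
    by rewrite sumr_const card_ord mulr_natl.
  apply: ler_sum => t _; apply: (mass_mono_le R Mpos Mn); exact: ltnW.
have mT0 : 0 <= mass R n M T by apply: mass_ge0.
have GmT : G * mass R n M T <= T%:R * mass R n M T by apply: ler_wpM2r.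
have K := key T.
have P0 := phi0_lower n0 (@hL0).
lra.
Qed.

End Final.

Arguments next : simpl never.

Section Main.
Variables (R : realType) (n M : nat).

Lemma surv_sum T : \sum_(0 <= t < T.+1) surv R n M t = 1 + \sum_(t < T) mass R n M t.
Proof.
by rewrite big_mkord big_ord_recl /=; congr (_ + _).
Qed.

Lemma surv_ge0 (Mpos : (0 < M)%N) (Mn : (M <= n)%N) t : 0 <= surv R n M t.
Proof. case: t => [|t] /=; first exact: ler01. exact: mass_ge0. Qed.

Lemma sum_id m : (\sum_(j < m) (j%:R : R)) * 2 = m%:R * (m%:R - 1).
Proof.
elim: m => [|m IH]; first by rewrite big_ord0 mul0r mul0r.
by rewrite big_ord_recr /= mulrDl IH -natr1; ring.
Qed.

Lemma hU0_le (Mn : (M <= n)%N) (n1 : (1 <= n)%N) : hU R n M 0%N <= 2 * n%:R ^+ 3.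
Proof.
have nn : (1 : R) <= n%:R by rewrite ler1n.
have Mr : (M%:R : R) <= n%:R by rewrite ler_nat.
rewrite /hU /hh.
apply: (@le_trans _ _ (\sum_(j < n) (2 * n%:R ^+ 2 : R))).
  apply: ler_sum => j _; rewrite leq0n mul1r /aU.
  have jn : (j%:R : R) <= n%:R by rewrite ler_nat ltnW.
  have j0 : (0 : R) <= j%:R by exact: ler0n.
  case: (posnP M) => [M0|Mp].
    rewrite M0 /= sub0r; have : 0 <= j%:R * 1 :> R by rewrite mulr1.
    have : (n%:R : R) <= n%:R ^+ 2 by rewrite expr2 ler_peMl // ltW.
    move=> h1 h2; have : j%:R * -1 <= 0 :> R by rewrite mulrN1 oppr_le0.
    lra.
  have M1 : (1 : R) <= M%:R by rewrite ler1n.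
  have P : j%:R * (M%:R - 1) <= n%:R * n%:R :> R.
    by apply: ler_pM => //; lra.
  have : (n%:R : R) <= n%:R ^+ 2 by rewrite expr2 ler_peMl // ltW.
  rewrite expr2 in P *; lra.
rewrite sumr_const card_ord -mulr_natr le_eqVlt; apply/orP; left; apply/eqP; ring.
Qed.

End Main.

Lemma hL0_eq (R : realType) n M : hL R n M 0%N * 2 = beta R M * (n%:R * (n%:R - 1)).
Proof.
rewrite /hL /hh -sum_id mulrA; congr (_ * _).
rewrite mulr_sumr; apply: eq_bigr => j _.
by rewrite leq0n mul1r /aL.
Qed.

Theorem theorem4 (R : realType) (c : R) (hc0 : 0 < c) (hc1 : c <= 1) :
  exists (a b : R), [/\ 0 < a, 0 < b &
    exists N : nat, forall n M : nat, (N <= n)%N -> M%:R = c * n%:R ->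
      ((a * n%:R ^+ 3)%:E <= expected_runtime R n M <= (b * n%:R ^+ 3)%:E)%E].
Proof.
exists (c / 128), 3; split; first by apply: divr_gt0.
  by [].
have c2 : 0 <= 2 / c by apply: divr_ge0 => //; apply: ltW.
pose N0 := Num.bound (2 / c).
have hN0 : 2 / c < N0%:R by apply: archi_boundP.
exists (N0 + 2)%N => n M hn hM.
have n2 : (2 <= n)%N by lia.
have n1 : (1 <= n)%N by lia.
have nR : (N0%:R : R) <= n%:R by rewrite ler_nat; lia.
have cn2 : 2 < c * n%:R.
  have : c * (2 / c) < c * n%:R by rewrite ltr_pM2l //; apply: lt_le_trans hN0 nR.
  by rewrite mulrCA mulfV ?gt_eqF // mulr1.
have Mn : (M <= n)%N.
  rewrite -(ler_nat R) hM.
  have h0 : (0:R) <= n%:R by exact: ler0n.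
  by have := ler_wpM2r h0 hc1; rewrite mul1r.
have Mpos : (0 < M)%N.
  by rewrite -(ltr_nat R) hM; lra.
have u0 : forall k, (0 <= k)%N -> true -> (0 <= (surv R n M k)%:E)%E.
  by move=> k _ _; rewrite lee_fin; apply: surv_ge0.
apply/andP; split.
  have [T HT] := lower_partial R Mpos Mn n1.
  apply: le_trans (nneseries_lim_ge T.+1 u0).
  rewrite sumEFin lee_fin surv_sum.
  have e := hL0_eq R n M.
  have n2R : (2 : R) <= n%:R by rewrite ler_nat.
  have X : c * n%:R / 2 <= M%:R - 1 by rewrite hM; lra.
  have Y : n%:R / 2 <= n%:R - 1 :> R by lra.
  have XY : c * n%:R / 2 * (n%:R / 2) <= (M%:R - 1) * (n%:R - 1).
    by apply: ler_pM => //; lra.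
  have XYn : c * n%:R / 2 * (n%:R / 2) * n%:R <= (M%:R - 1) * (n%:R - 1) * n%:R.
    by apply: ler_wpM2r => //; exact: ler0n.
  have m0 : 0 <= \sum_(t < T) mass R n M t.
    by apply: sumr_ge0 => t _; apply: mass_ge0.
  rewrite /beta in e.
  have Hmain : c / 128 * n%:R ^+ 3 <= hL R n M 0%N / 4.
    have -> : c / 128 * n%:R ^+ 3 = (c * n%:R / 2 * (n%:R / 2) * n%:R) / 32 by rewrite !exprS expr0; field.
    have -> : hL R n M 0%N / 4 = ((M%:R - 1) * (n%:R - 1) * n%:R) / 32.
      have -> : hL R n M 0%N = hL R n M 0%N * 2 / 2 by field.
      by rewrite e; field.
    by apply: ler_wpM2r.
  lra.
rewrite /expected_runtime.
apply: (lime_le (is_cvg_nneseries u0)); apply: nearW => k.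
rewrite sumEFin lee_fin.
have U := hU0_le R Mn n1.
apply: (@le_trans _ _ (\sum_(0 <= t < k.+1) surv R n M t)).
  rewrite big_nat_recr //= lerDl; exact: surv_ge0.
rewrite surv_sum.
have := upper_partial R Mpos Mn k.
have : (1 : R) <= n%:R ^+ 3 by rewrite exprn_ege1 // ler1n.
lra.
Qed.
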